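(* Let $d=\infty$, $C>0$, and let ${\boldsymbol\gamma}$ be POD weights with parameters $a,p$ such that $\Gamma_1>0$, $p>a$ and $\sum_{j\in\mathbb N}\gamma_j<\infty$. Then ${\boldsymbol\gamma}\in\mathcal S_{\infty,C}$ and $$\mathrm{decay}(T^\uparrow_{\infty,C}{\boldsymbol\gamma})=\mathrm{decay}({\boldsymbol\gamma})=p.$$
   Context: $\mathcal U_\infty$ is the set of finite subsets of $\mathbb N$; weights are families $(\gamma_u)_{u\in\mathcal U_\infty}$ of non-negative reals. For a family $(a_v)_{v\in V}$ of non-negative reals indexed by a countably infinite set $V$, $\mathrm{decay}((a_v))=\sup\{\tau>0:\sum_{v\in V}a_v^{1/\tau}<\infty\}$ with $\sup\emptyset=0$. POD weights: $\gamma_u=\Gamma_{|u|}\prod_{j\in u}\gamma_j$ for a non-increasing sequence $(\gamma_j)_{j\in\mathbb N}$ of non-negative reals and non-negative $(\Gamma_k)_{k\ge0}$ with $\Gamma_k\le C_a(k!)^a$ for all $k$, some $a,C_a>0$; $p=\mathrm{decay}((\gamma_j)_{j\in\mathbb N})$. For $C>0$: $\mathcal S_{\infty,C}=\{{\boldsymbol\gamma}:\sum_vC^{2|v|}\gamma_v<\infty\}$ and $(T^\uparrow_{\infty,C}{\boldsymbol\gamma})_u=\sum_{v\in\mathcal U_\infty,\,v\supseteq u}C^{2|v|}\gamma_v$. *)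

(* Defs.v *)
From HB Require Import structures.
From mathcomp Require Import all_boot all_order all_algebra finmap.
From mathcomp Require Import all_classical all_reals all_analysis.
Set Implicit Arguments. Unset Strict Implicit. Unset Printing Implicit Defensive.
Import Order.TTheory GRing.Theory Num.Theory.
Local Open Scope classical_set_scope.
Local Open Scope ring_scope.

(* U_infty = finite subsets of N, represented by {fset nat}. *)
Notation Uinf := {fset nat}.

(* decay((a_v)_{v in V}) = sup{ tau > 0 : sum_v a_v^(1/tau) < oo }, sup of empty = 0.
   Values in the extended reals (decay may be +oo). *)
Definition decay (R : realType) (V : choiceType) (a : V -> R) : \bar R :=
  ereal_sup ([set (tau%:E)%E | tau in
               [set tau : R | 0 < tau /\
                  (esum setT (fun v => ((a v) `^ (1 / tau))%:E) < +oo)%E]]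
             `|` [set 0%E]).

Definition POD (R : realType) (Gam gam : nat -> R) (u : Uinf) : R :=
  Gam #|` u| * \prod_(j <- u) gam j.

Definition S_inf (R : realType) (C : R) (g : Uinf -> R) : Prop :=
  (esum setT (fun v : Uinf => (C ^+ (2 * #|` v|) * g v)%:E) < +oo)%E.

(* (T^up_{infty,C} gamma)_u = sum_{v superset of u} C^(2|v|) gamma_v
   (real-valued via fine; finite whenever gamma is in S_{infty,C}). *)
Definition Tup (R : realType) (C : R) (g : Uinf -> R) (u : Uinf) : R :=
  fine (esum [set v : Uinf | (u `<=` v)%fset]
             (fun v : Uinf => (C ^+ (2 * #|` v|) * g v)%:E)).

(* Main.v *)
Require Import Defs.
From HB Require Import structures.
From mathcomp Require Import all_boot all_order all_algebra finmap.
From mathcomp Require Import all_classical all_reals all_analysis.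
From mathcomp.algebra_tactics Require Import ring lra.
Import Order.TTheory GRing.Theory Num.Theory.
Local Open Scope classical_set_scope.
Local Open Scope ring_scope.

Set Implicit Arguments. Unset Strict Implicit.


Section H.
Variable R : realType.

Lemma esum_le_bound (T : choiceType) (f : T -> R) (M : R) :
  (forall s : seq T, uniq s -> \sum_(x <- s) f x <= M) ->
  (esum setT (fun x => (f x)%:E) <= M%:E)%E.
Proof.
move=> H; apply: ge_ereal_sup => _ [X [finX _] <-].
rewrite fsbig_finite//= sumEFin lee_fin; apply: H; exact: fset_uniq.
Qed.

Lemma esum_bound_lt (T : choiceType) (f : T -> R) :
  (forall x, 0 <= f x) ->
  (esum setT (fun x => (f x)%:E) < +oo)%E ->
  exists M, forall s : seq T, uniq s -> \sum_(x <- s) f x <= M.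
Proof.
move=> f0 H; exists (fine (esum setT (fun x => (f x)%:E))) => s us.
have H0 : (0 <= esum setT (fun x => (f x)%:E))%E by apply: esum_ge0 => x _; rewrite lee_fin.
rewrite -lee_fin fineK; last by rewrite ge0_fin_numE.
rewrite -sumEFin; apply: esum_ge; exists [set` s]; first by split => //; exact: finite_set_seq.
by rewrite fsbig_seq.
Qed.

End H.

Unset Implicit Arguments. Set Strict Implicit.


Section H.
Variable R : realType.

Lemma expand_prod (N : nat) (b : nat -> R) (t : R) :
  \prod_(i < N) (1 + t * b i) =
  \sum_(A : {set 'I_N}) t ^+ #|A| * \prod_(i in A) b i.
Proof.
rewrite (eq_bigr (fun i : 'I_N => t * b i + 1)); last by move=> i _; rewrite addrC.
rewrite (bigA_distr _ _ (fun i : 'I_N => t * b i) (fun=> 1)).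
apply: eq_bigr => A _.
rewrite -big_mkcond /= big_split /= prodr_const; done.
Qed.

Lemma prod1D_le_expR (N : nat) (x : nat -> R) :
  (forall i, 0 <= x i) ->
  \prod_(i < N) (1 + x i) <= expR (\sum_(i < N) x i).
Proof.
move=> x0; elim: N => [|N IH]; first by rewrite !big_ord0 expR0.
rewrite !big_ord_recr /= expRD.
apply: ler_pM => //.
- by apply: prodr_ge0 => i _; rewrite addr_ge0.
- by rewrite addr_ge0.
- exact: expR_ge1Dx.
Qed.

Lemma key_finite (b w : nat -> R) (S B : R) :
  (forall i, 0 <= b i) -> (forall m, 0 <= w m) -> 0 < S ->
  (forall N, \sum_(i < N) b i <= S) ->
  (forall N, \sum_(m < N) w m * (S / m%:R) ^+ m * expR m%:R <= B) ->
  forall N, \sum_(A : {set 'I_N}) w #|A| * \prod_(i in A) b (val i) <= B.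
Proof.
move=> b0 w0 S0 bS wB N.
pose t (m : nat) := m%:R / S.
pose r (m : nat) := (S / m%:R) ^+ m.
have r0 m : 0 <= r m by rewrite exprn_ge0 // divr_ge0 // ltW.
have t0 m : 0 <= t m by rewrite divr_ge0 // ltW.
have rt k : r k * t k ^+ k = 1.
  rewrite /r /t -exprMn.
  case: k => [|k]; first by rewrite expr0.
  by rewrite mulrA divfK ?pnatr_eq0 // divff ?expr1n // gt_eqF.
have step1 : forall A : {set 'I_N},
    w #|A| <= \sum_(m < N.+1) w m * r m * t m ^+ #|A|.
  move=> A; have kN : (#|A| < N.+1)%N by rewrite ltnS (leq_trans (max_card _)) // card_ord.
  rewrite (bigD1 (Ordinal kN)) //= -mulrA rt mulr1 lerDl.
  by apply: sumr_ge0 => m _; rewrite mulr_ge0 ?exprn_ge0 // mulr_ge0.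
apply: (le_trans (y := \sum_(A : {set 'I_N}) \sum_(m < N.+1)
          w m * r m * (t m ^+ #|A| * \prod_(i in A) b (val i)))).
  apply: ler_sum => A _.
  rewrite (eq_bigr (fun m : 'I_N.+1 => w m * r m * t m ^+ #|A| * \prod_(i in A) b (val i))); last by move=> m _; rewrite mulrA.
  rewrite -big_distrl /=.
  apply: ler_wpM2r; first by apply: prodr_ge0.
  exact: step1.
rewrite exchange_big /=.
apply: le_trans (wB N.+1).
apply: ler_sum => m _.
rewrite -mulr_sumr -(expand_prod N (fun i => b i) (t m)).
rewrite -!mulrA; apply: ler_wpM2l => //; apply: ler_wpM2l; first exact: r0.
apply: (le_trans (prod1D_le_expR N (fun i => t m * b i) _)).
  by move=> i; rewrite mulr_ge0.
rewrite ler_expR -mulr_sumr.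
have -> : m%:R = t m * S by rewrite /t divfK // gt_eqF.
by apply: ler_wpM2l.
Qed.

End H.

Set Implicit Arguments. Unset Strict Implicit.


Lemma fact_le_expn (m : nat) : (m`! <= m ^ m)%N.
Proof.
elim: m => [//|m IH]; rewrite factS expnS leq_mul2l /=.
apply: (leq_trans IH); case: m {IH} => [//|m].
by rewrite leq_exp2r.
Qed.

Section H.
Variable R : realType.

Lemma geom_half (N : nat) : \sum_(m < N) (2^-1 : R) ^+ m <= 2.
Proof.
suff H : \sum_(m < N) (2^-1 : R) ^+ m + 2 * (2^-1) ^+ N = 2.
  by rewrite -[X in _ <= X]H lerDl mulr_ge0 // exprn_ge0.
elim: N => [|N IH]; first by rewrite big_ord0 expr0 add0r mulr1.
rewrite big_ord_recr /= exprSr; lra.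
Qed.

Lemma powR_natexp (x y : R) (m : nat) : 0 <= x -> (x ^+ m) `^ y = (x `^ y) ^+ m.
Proof.
move=> x0; rewrite -powR_mulrn // powRAC powR_mulrn //; exact: powR_ge0.
Qed.

Lemma series_bound (c al S : R) : 0 <= c -> 0 <= al -> al < 1 -> 0 < S ->
  exists B, forall N, \sum_(m < N) (c * (m`!%:R) `^ al) * (S / m%:R) ^+ m * expR m%:R <= B.
Proof.
move=> c0 al0 al1 S0.
pose term (m : nat) := (c * (m`!%:R) `^ al) * (S / m%:R) ^+ m * expR m%:R.
have term0 m : 0 <= term m.
  by rewrite /term !mulr_ge0 ?powR_ge0 ?exprn_ge0 ?expR_ge0 // divr_ge0 // ltW.
pose y := 2 * S * expR 1.
have y0 : 0 < y by rewrite /y !mulr_gt0 // expR_gt0.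
pose M0 := (Num.truncn (y `^ (1 - al)^-1)).+1.
have bnd m : (M0 <= m)%N -> term m <= c * (2^-1) ^+ m.
  move=> Hm.
  have m0 : (0 < m)%N by apply: leq_trans Hm.
  have mR : 0 < (m%:R : R) by rewrite ltr0n.
  have H1 : y <= (m%:R : R) `^ (1 - al).
    have -> : y = (y `^ (1 - al)^-1) `^ (1 - al).
      by rewrite -powRrM mulVf ?powRr1 ?ltW // subr_eq0 gt_eqF.
    apply: ge0_ler_powR; rewrite ?subr_ge0 ?ltW ?nnegrE ?powR_ge0 ?ltW //.
    apply: (lt_le_trans (truncnS_gt _)).
    by rewrite ler_nat.
  have F : (m`!%:R : R) `^ al <= ((m%:R : R) `^ al) ^+ m.
    rewrite -powR_natexp ?ler0n //.
    apply: ge0_ler_powR => //; rewrite ?nnegrE ?ler0n ?exprn_ge0 //.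
    by rewrite -natrX ler_nat fact_le_expn.
  have -> : term m = c * m`!%:R `^ al * (S / m%:R) ^+ m * expR 1 ^+ m by rewrite /term -expRM_natl mulr1.
  apply: (le_trans (y := c * ((m%:R : R) `^ al) ^+ m * (S / m%:R) ^+ m * expR 1 ^+ m)).
    apply: ler_wpM2r; first by rewrite exprn_ge0 ?expR_ge0.
    apply: ler_wpM2r; first by rewrite exprn_ge0 // divr_ge0 // ltW.
    exact: ler_wpM2l.
  have key : (m%:R `^ al) * (S / m%:R) * expR 1 <= 2^-1.
    have pq : (m%:R : R) = (m%:R) `^ al * (m%:R) `^ (1 - al).
      rewrite -powRD; first by rewrite addrC subrK powRr1 // ler0n.
      by rewrite addrC subrK oner_eq0.
    have p0 : 0 < (m%:R : R) `^ al by rewrite powR_gt0.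
    have q0 : 0 < (m%:R : R) `^ (1 - al) by rewrite powR_gt0.
    move: H1 pq p0 q0; rewrite /y.
    set p := (m%:R : R) `^ al; set q := (m%:R : R) `^ (1 - al) => H1 pq p0 q0.
    rewrite [in S / _]pq.
    have -> : p * (S / (p * q)) * expR 1 = (S * expR 1) / q.
      by field; rewrite !gt_eqF.
    rewrite ler_pdivrMr //.
    move: H1; rewrite -mulrA; set u := S * expR 1; lra.
  rewrite -!mulrA; apply: ler_wpM2l => //.
  rewrite !mulrA -!exprMn; apply: lerXn2r => //.
    by rewrite nnegrE !mulr_ge0 ?powR_ge0 ?expR_ge0 // ?invr_ge0 ?ler0n // ltW.
  by rewrite nnegrE invr_ge0 ler0n.
pose L := c + \sum_(m < M0) term m * 2 ^+ m.
exists (L * 2) => N.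
have Lt m : term m <= L * (2^-1) ^+ m.
  case: (leqP M0 m) => Hm.
    apply: (le_trans (bnd m Hm)); rewrite ler_wpM2r ?exprn_ge0 // /L lerDl.
    by apply: sumr_ge0 => i _; rewrite mulr_ge0 ?exprn_ge0.
  have -> : term m = (term m * 2 ^+ m) * (2^-1) ^+ m.
    by rewrite -mulrA -exprMn divff ?expr1n ?mulr1.
  rewrite ler_wpM2r ?exprn_ge0 // /L.
  apply: (le_trans (y := \sum_(i < M0) term i * 2 ^+ i)); last by rewrite lerDr.
  rewrite (bigD1 (Ordinal Hm)) //= lerDl.
  by apply: sumr_ge0 => i _; rewrite mulr_ge0 ?exprn_ge0.
apply: (le_trans (y := \sum_(m < N) L * (2^-1) ^+ m)); first by apply: ler_sum => m _; exact: Lt.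
rewrite -mulr_sumr ler_wpM2l ?geom_half //.
rewrite /L addr_ge0 //; apply: sumr_ge0 => i _; rewrite mulr_ge0 ?exprn_ge0 //.
Qed.

End H.

Unset Implicit Arguments. Set Strict Implicit.


Section H.
Variable R : realType.

Definition phiN (N : nat) (A : {set 'I_N}) : {fset nat} :=
  seq_fset tt (map val (enum A)).
Arguments phiN {N}.


Lemma phiN_card N (A : {set 'I_N}) : #|` phiN A| = #|A|.
Proof.
rewrite /phiN size_seq_fset undup_id ?size_map ?cardE //.
by rewrite map_inj_uniq ?enum_uniq //; exact: val_inj.
Qed.

Lemma phiN_prod N (A : {set 'I_N}) (b : nat -> R) :
  \prod_(j <- phiN A) b j = \prod_(i in A) b (val i).
Proof.
rewrite /phiN (perm_big _ (seq_fset_perm _ _)) undup_id; last first.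
  by rewrite map_inj_uniq ?enum_uniq //; exact: val_inj.
by rewrite big_map big_enum.
Qed.

Lemma bridge (w b : nat -> R) (s : seq {fset nat}) :
  (forall m, 0 <= w m) -> (forall i, 0 <= b i) -> uniq s ->
  exists N, \sum_(u <- s) w #|` u| * \prod_(j <- u) b j <=
    \sum_(A : {set 'I_N}) w #|A| * \prod_(i in A) b (val i).
Proof.
move=> w0 b0 us.
pose N := (\max_(u <- s) \max_(j <- u) j.+1)%N.
exists N.
have HN u j : u \in s -> j \in u -> (j < N)%N.
  move=> us' ju.
  apply: (leq_trans _ (@leq_bigmax_seq _ s xpredT (fun u => \max_(j <- u) j.+1)%N u us' isT)).
  by have := @leq_bigmax_seq _ (enum_fset u) xpredT (fun j => j.+1)%N j ju isT.
pose psi (u : {fset nat}) : {set 'I_N} := [set i : 'I_N | val i \in u]%SET.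
have phipsi u : u \in s -> phiN (psi u) = u.
  move=> us'; apply/fsetP => x; rewrite /phiN seq_fsetE.
  apply/mapP/idP.
    by move=> [i]; rewrite mem_enum inE => + ->.
  move=> xu; exists (Ordinal (HN u x us' xu)) => //.
  by rewrite mem_enum inE.
pose H (A : {set 'I_N}) := w #|A| * \prod_(i in A) b (val i).
have -> : \sum_(u <- s) w #|` u| * \prod_(j <- u) b j = \sum_(u <- s) H (psi u).
  rewrite big_seq_cond [RHS]big_seq_cond; apply: eq_bigr => u /andP[us' _].
  by rewrite /H -phiN_card -(phiN_prod _ (psi u)) phipsi.
rewrite -(big_map psi xpredT H) big_uniq; last first.
  rewrite map_inj_in_uniq // => u v us' vs' e.
  by rewrite -(phipsi u us') -(phipsi v vs') e.
rewrite [leRHS](bigID (fun A => A \in map psi s)) /= lerDl.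
by apply: sumr_ge0 => A _; rewrite /H mulr_ge0 // prodr_ge0.
Qed.

End H.

Set Implicit Arguments. Unset Strict Implicit.


Section H.
Variable R : realType.

Lemma prod_const_seq (I : Type) (r : seq I) (x : R) : \prod_(j <- r) x = x ^+ size r.
Proof. by elim: r => [|y r IH]; rewrite ?big_nil ?expr0 // big_cons IH exprS. Qed.

Lemma powR_prod (I : Type) (r : seq I) (F : I -> R) (q : R) :
  (forall i, 0 <= F i) -> (\prod_(j <- r) F j) `^ q = \prod_(j <- r) (F j `^ q).
Proof.
move=> F0; elim: r => [|y r IH]; first by rewrite !big_nil powR1.
rewrite !big_cons powRM ?IH //; exact: prodr_ge0.
Qed.

Lemma L2 (Gam gam : nat -> R) (C D q a Ca : R) :
  0 < C -> 0 < D -> 0 < q -> 0 <= a -> a * q < 1 -> 0 <= Ca ->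
  (forall j, 0 <= gam j) -> (forall k, 0 <= Gam k) ->
  (forall k, Gam k <= Ca * (k`!%:R) `^ a) ->
  (esum setT (fun j => (gam j `^ q)%:E) < +oo)%E ->
  (esum setT (fun u : {fset nat} =>
     (D ^+ #|` u| * (C ^+ (2 * #|` u|) * POD Gam gam u) `^ q)%:E) < +oo)%E.
Proof.
move=> C0 D0 q0 a0 aq1 Ca0 g0 G0 GCa Hg.
have [M HM] := esum_bound_lt (fun j => powR_ge0 (gam j) q) Hg.
have M0 : 0 <= M by have := HM [::] isT; rewrite big_nil.
pose K := D * (C ^+ 2) `^ q.
have K0 : 0 < K by rewrite mulr_gt0 // powR_gt0 // exprn_gt0.
pose b j := K * gam j `^ q.
have b0 j : 0 <= b j by rewrite mulr_ge0 ?powR_ge0 // ltW.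
pose S := K * M + 1.
have S0 : 0 < S by rewrite /S ltr_wpDl // mulr_ge0 // ltW.
have bS N : \sum_(i < N) b i <= S.
  rewrite -mulr_sumr /S; apply: (le_trans (y := K * M)); last by rewrite lerDl.
  apply: ler_wpM2l; first exact: ltW.
  have := HM (iota 0 N) (iota_uniq 0 N).
  by rewrite -(big_mkord xpredT (fun i => gam i `^ q)) /index_iota subn0.
pose w m := Ca `^ q * (m`!%:R) `^ (a * q).
have w0 m : 0 <= w m by rewrite mulr_ge0 ?powR_ge0.
have [B HB] := series_bound (powR_ge0 Ca q) (mulr_ge0 a0 (ltW q0)) aq1 S0.
have KF := @key_finite R b w S B b0 w0 S0 bS HB.
rewrite (le_lt_trans (y := B%:E)) ?ltry //.
apply: esum_le_bound => s us.
have [N HN] := @bridge R w b s w0 b0 us.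
apply: le_trans (KF N); apply: le_trans HN.
apply: ler_sum => u _.
rewrite /POD /b /w big_split /= prod_const_seq -/(#|` u|).
have C0' : 0 <= C by exact: ltW.
have gp : 0 <= \prod_(j <- u) gam j by exact: prodr_ge0.
rewrite powRM ?mulr_ge0 ?exprn_ge0 //.
rewrite powRM ?exprn_ge0 //.
rewrite exprM powR_natexp ?exprn_ge0 // powR_prod //.
rewrite /K exprMn.
set P := \prod_(j <- u) gam j `^ q.
set k := #|` u|.
have HG : Gam k `^ q <= Ca `^ q * (k`!%:R) `^ (a * q).
  rewrite powRrM -powRM ?powR_ge0 //.
  apply: ge0_ler_powR; first exact: ltW.
  - by rewrite nnegrE.
  - by rewrite nnegrE mulr_ge0 ?powR_ge0.
  - exact: GCa.
have P0 : 0 <= P by rewrite prodr_ge0 // => j _; exact: powR_ge0.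
have E1 : 0 <= D ^+ k * ((C ^+ 2) `^ q) ^+ k.
  by rewrite mulr_ge0 ?exprn_ge0 ?powR_ge0 // ltW.
have -> : D ^+ k * (((C ^+ 2) `^ q) ^+ k * (Gam k `^ q * P)) =
  (D ^+ k * ((C ^+ 2) `^ q) ^+ k * P) * Gam k `^ q by ring.
have -> : Ca `^ q * k`!%:R `^ (a * q) * (D ^+ k * (C ^+ 2) `^ q ^+ k * P) =
  (D ^+ k * ((C ^+ 2) `^ q) ^+ k * P) * (Ca `^ q * k`!%:R `^ (a * q)) by ring.
by apply: ler_wpM2l => //; rewrite mulr_ge0.
Qed.

End H.

Set Implicit Arguments. Unset Strict Implicit.


Section H.
Variable R : realType.

Lemma powR_le_self (t r : R) : 0 <= t <= 1 -> 1 <= r -> t `^ r <= t.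
Proof.
move=> /andP[t0 t1] r1; have [->|tn0] := eqVneq t 0.
  by rewrite powR0 // gt_eqF // (lt_le_trans ltr01).
by apply: ge1r_powR => //; rewrite t1 andbT lt_neqAle eq_sym tn0.
Qed.

Lemma superadd (x y r : R) : 0 <= x -> 0 <= y -> 1 <= r ->
  x `^ r + y `^ r <= (x + y) `^ r.
Proof.
move=> x0 y0 r1.
have r0 : r != 0 by rewrite gt_eqF // (lt_le_trans ltr01).
have [s0|sn0] := eqVneq (x + y) 0.
  have xz : x = 0 by lra.
  have yz : y = 0 by lra.
  by rewrite xz yz addr0 powR0.
have sp : 0 < x + y by rewrite lt_neqAle eq_sym sn0 addr_ge0.
have Hx : x = (x + y) * (x / (x + y)) by field.
have Hy : y = (x + y) * (y / (x + y)) by field.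
have ax : 0 <= x / (x + y) <= 1.
  by apply/andP; split; [apply: divr_ge0 => //; exact: ltW | rewrite ler_pdivrMr // mul1r lerDl].
have ay : 0 <= y / (x + y) <= 1.
  by apply/andP; split; [apply: divr_ge0 => //; exact: ltW | rewrite ler_pdivrMr // mul1r lerDr].
have e1 : x `^ r = (x + y) `^ r * (x / (x + y)) `^ r.
  rewrite -powRM; [by rewrite -Hx | exact: ltW | by case/andP: ax].
have e2 : y `^ r = (x + y) `^ r * (y / (x + y)) `^ r.
  rewrite -powRM; [by rewrite -Hy | exact: ltW | by case/andP: ay].
rewrite e1 e2 -mulrDr; apply: (le_trans (y := (x + y) `^ r * (x / (x + y) + y / (x + y)))).
  apply: ler_wpM2l; first exact: powR_ge0.
  by apply: lerD; apply: powR_le_self.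
by rewrite -mulrDl divff // mulr1.
Qed.

Lemma sum_le_powsum (I : Type) (s : seq I) (f : I -> R) (r : R) :
  1 <= r -> (forall i, 0 <= f i) ->
  \sum_(i <- s) f i <= (\sum_(i <- s) f i `^ (1 / r)) `^ r.
Proof.
move=> r1 f0; have r0 : 0 < r by rewrite (lt_le_trans ltr01).
elim: s => [|y s IH]; first by rewrite !big_nil powR_ge0.
rewrite !big_cons.
apply: (le_trans (y := (f y `^ (1 / r)) `^ r + (\sum_(i <- s) f i `^ (1 / r)) `^ r)).
  have -> : (f y `^ (1 / r)) `^ r = f y by rewrite -powRrM mul1r mulVf ?gt_eqF // powRr1.
  by rewrite lerD2l.
apply: superadd => //; first exact: powR_ge0.
by apply: sumr_ge0 => i _; exact: powR_ge0.
Qed.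

Lemma esum_sub_le (T : choiceType) (A : set T) (f : T -> \bar R) :
  (esum A f <= esum setT f)%E.
Proof.
apply: ge_ereal_sup => _ [X [finX XA] <-]; apply: esum_ge; exists X => //.
Qed.

Lemma esum_pow_bound (T : choiceType) (A : set T) (f : T -> R) (r : R) :
  1 <= r -> (forall x, 0 <= f x) ->
  (esum A (fun x => (f x `^ (1 / r))%:E) < +oo)%E ->
  (esum A (fun x => (f x)%:E) <= ((fine (esum A (fun x => (f x `^ (1 / r))%:E))) `^ r)%:E)%E.
Proof.
move=> r1 f0 Hfin.
have r0 : 0 < r by rewrite (lt_le_trans ltr01).
set E := esum A _ in Hfin *.
have E0 : (0 <= E)%E by apply: esum_ge0 => x _; rewrite lee_fin powR_ge0.
apply: ge_ereal_sup => _ [X [finX XA] <-].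
rewrite fsbig_finite //= sumEFin lee_fin.
apply: (le_trans (sum_le_powsum _ r1 f0)).
apply: ge0_ler_powR; first exact: ltW.
- by rewrite nnegrE sumr_ge0 // => i _; exact: powR_ge0.
- by rewrite nnegrE fine_ge0.
rewrite -lee_fin fineK; last by rewrite ge0_fin_numE.
rewrite -sumEFin -fsbig_finite //.
apply: esum_ge; exists X => //.
Qed.

Lemma LB_lemma (F : {fset nat} -> R) (h : nat -> R) (c : R) :
  0 < c -> (forall j, 0 <= h j) -> (forall u, 0 <= F u) ->
  (forall j, c * h j <= F [fset j]%fset) ->
  (esum setT (fun u => (F u)%:E) < +oo)%E ->
  (esum setT (fun j => (h j)%:E) < +oo)%E.
Proof.
move=> c0 h0 F0 Hc HF.
have [M HM] := esum_bound_lt F0 HF.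
apply: (le_lt_trans (y := (c^-1 * M)%:E)); last exact: ltry.
apply: esum_le_bound => s us.
apply: (le_trans (y := c^-1 * \sum_(j <- s) F [fset j]%fset)).
  rewrite mulr_sumr; apply: ler_sum => j _.
  by rewrite ler_pdivlMl // Hc.
apply: ler_wpM2l; first by rewrite invr_ge0 ltW.
rewrite -(big_map (fun j => [fset j]%fset) xpredT F).
apply: HM; rewrite map_inj_uniq //.
by move=> i j /fsetP /(_ i); rewrite !inE eqxx => /esym/eqP.
Qed.

Lemma sum_if_count (T : eqType) (s : seq T) (P : pred T) (c : R) :
  (\sum_(u <- s) (if P u then c%:E else 0%E) = ((count P s)%:R * c)%:E)%E.
Proof.
elim: s => [|y s IH]; first by rewrite big_nil mul0r.
rewrite big_cons IH /=; case: (P y) => /=.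
  by rewrite -EFinD natrD mulrDl mul1r.
by rewrite add0e add0n.
Qed.

Lemma count_subsets (s : seq {fset nat}) (v : {fset nat}) :
  uniq s -> (count (fun u => (u `<=` v)%fset) s <= 2 ^ #|` v|)%N.
Proof.
move=> us; rewrite -size_filter -card_fpowerset.
apply: uniq_leq_size; first exact: filter_uniq.
by move=> u; rewrite mem_filter fpowersetE => /andP[].
Qed.

End H.

Set Implicit Arguments. Unset Strict Implicit.


Section H.
Variable R : realType.

Lemma decay_le_of (V1 V2 : choiceType) (f1 : V1 -> R) (f2 : V2 -> R) :
  (forall t, 0 < t -> (esum setT (fun v => (f1 v `^ (1 / t))%:E) < +oo)%E ->
     (esum setT (fun v => (f2 v `^ (1 / t))%:E) < +oo)%E) ->
  (decay f1 <= decay f2)%E.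
Proof.
move=> H; rewrite /decay; apply: ge_ereal_sup => y [[t [t0 Ht] <-]|->].
  by apply: ereal_sup_ubound; left; exists t => //; split => //; exact: H.
by apply: ereal_sup_ubound; right.
Qed.

Lemma decay_ge_of (V1 V2 : choiceType) (f1 : V1 -> R) (f2 : V2 -> R) :
  (forall t, 0 < t -> (esum setT (fun v => (f2 v `^ (1 / t))%:E) < +oo)%E ->
     exists t', [/\ 0 < t', t <= t' &
       (esum setT (fun v => (f1 v `^ (1 / t'))%:E) < +oo)%E]) ->
  (decay f2 <= decay f1)%E.
Proof.
move=> H; rewrite /decay; apply: ge_ereal_sup => y [[t [t0 Ht] <-]|->].
  have [t' [t'0 tt' Ht']] := H t t0 Ht.
  apply: (le_trans (y := t'%:E)); first by rewrite lee_fin.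
  by apply: ereal_sup_ubound; left; exists t'.
by apply: ereal_sup_ubound; right.
Qed.

Lemma POD_ge0 (Gam gam : nat -> R) u :
  (forall k, 0 <= Gam k) -> (forall j, 0 <= gam j) -> 0 <= POD Gam gam u.
Proof. by move=> G0 g0; rewrite /POD mulr_ge0 // prodr_ge0. Qed.

Lemma POD1 (Gam gam : nat -> R) j : POD Gam gam [fset j]%fset = Gam 1%N * gam j.
Proof. by rewrite /POD cardfs1 big_seq_fset1. Qed.

Lemma LemP (Gam gam : nat -> R) :
  (forall k, 0 <= Gam k) -> (forall j, 0 <= gam j) -> 0 < Gam 1%N ->
  forall t, 0 < t -> (esum setT (fun v => (POD Gam gam v `^ (1 / t))%:E) < +oo)%E ->
     (esum setT (fun v => (gam v `^ (1 / t))%:E) < +oo)%E.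
Proof.
move=> G0 g0 G1 t t0 H.
apply: (@LB_lemma R _ _ (Gam 1%N `^ (1 / t))) H.
- by apply: powR_gt0.
- by move=> j; exact: powR_ge0.
- by move=> u; exact: powR_ge0.
- by move=> j; rewrite POD1 powRM // ltW.
Qed.

End H.

Set Implicit Arguments. Unset Strict Implicit.


Section H.
Variable R : realType.

Lemma aq_lt1 (a m : R) : 0 < m -> a < m -> a * (1 / m) < 1.
Proof. by move=> m0 am; rewrite div1r ltr_pdivrMr // mul1r. Qed.

Lemma LemSinf (Gam gam : nat -> R) (C a Ca m : R) :
  0 < C -> 0 <= a -> 0 <= Ca ->
  (forall j, 0 <= gam j) -> (forall k, 0 <= Gam k) ->
  (forall k, Gam k <= Ca * (k`!%:R) `^ a) ->
  1 <= m -> a < m ->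
  (esum setT (fun j => (gam j `^ (1 / m))%:E) < +oo)%E ->
  S_inf C (POD Gam gam).
Proof.
move=> C0 a0 Ca0 g0 G0 GCa m1 am Hg.
have m0 : 0 < m by rewrite (lt_le_trans ltr01).
have q0 : 0 < 1 / m by rewrite divr_gt0.
have H := @L2 R Gam gam C 1 (1 / m) a Ca C0 ltr01 q0 a0 (aq_lt1 m0 am) Ca0 g0 G0 GCa Hg.
move: H; under eq_esum => v _ do rewrite expr1n mul1r; move=> H.
have x0 v : 0 <= C ^+ (2 * #|` v|) * POD Gam gam v.
  by rewrite mulr_ge0 ?exprn_ge0 ?POD_ge0 // ltW.
have HH := @esum_pow_bound R {fset nat} setT (fun v => C ^+ (2 * #|` v|) * POD Gam gam v) m m1 x0 H.
apply: le_lt_trans HH _; exact: ltry.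
Qed.

Lemma Tup_ge (Gam gam : nat -> R) (C : R) u :
  0 < C -> (forall j, 0 <= gam j) -> (forall k, 0 <= Gam k) ->
  S_inf C (POD Gam gam) ->
  C ^+ (2 * #|` u|) * POD Gam gam u <= Tup C (POD Gam gam) u.
Proof.
move=> C0 g0 G0 HS.
have x0 v : 0 <= C ^+ (2 * #|` v|) * POD Gam gam v.
  by rewrite mulr_ge0 ?exprn_ge0 ?POD_ge0 // ltW.
rewrite /Tup.
set E := esum _ _.
have E0 : (0 <= E)%E by apply: esum_ge0 => v _; rewrite lee_fin.
have Efin : E \is a fin_num.
  rewrite ge0_fin_numE //; apply: le_lt_trans HS; exact: esum_sub_le.
rewrite -lee_fin fineK //.
apply: esum_ge; exists [set u].
  by split; [exact: finite_set1 | move=> v /= ->; exact: fsubset_refl].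
by rewrite fsbig_set1.
Qed.

Lemma Tup_ge0 (Gam gam : nat -> R) (C : R) u :
  0 < C -> (forall j, 0 <= gam j) -> (forall k, 0 <= Gam k) ->
  0 <= Tup C (POD Gam gam) u.
Proof.
move=> C0 g0 G0; rewrite /Tup; apply: fine_ge0.
apply: esum_ge0 => v _; rewrite lee_fin mulr_ge0 ?exprn_ge0 ?POD_ge0 //; exact: ltW.
Qed.

Lemma LemT_sub (Gam gam : nat -> R) (C : R) :
  0 < C -> (forall j, 0 <= gam j) -> (forall k, 0 <= Gam k) -> 0 < Gam 1%N ->
  S_inf C (POD Gam gam) ->
  forall t, 0 < t -> (esum setT (fun v => (Tup C (POD Gam gam) v `^ (1 / t))%:E) < +oo)%E ->
     (esum setT (fun v => (gam v `^ (1 / t))%:E) < +oo)%E.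
Proof.
move=> C0 g0 G0 G1 HS t t0 H.
apply: (@LB_lemma R _ _ ((C ^+ 2 * Gam 1%N) `^ (1 / t))) H.
- by apply: powR_gt0; rewrite mulr_gt0 // exprn_gt0.
- by move=> j; exact: powR_ge0.
- by move=> u; exact: powR_ge0.
have C0' : 0 <= C by exact: ltW.
move=> j; rewrite -powRM ?mulr_ge0 ?exprn_ge0 //.
apply: ge0_ler_powR; first by rewrite ltW // divr_gt0.
- by rewrite nnegrE !mulr_ge0 ?exprn_ge0 // ltW.
- by rewrite nnegrE Tup_ge0.
have := @Tup_ge Gam gam C [fset j]%fset C0 g0 G0 HS.
by rewrite POD1 cardfs1 muln1 mulrA.
Qed.

End H.

Set Implicit Arguments. Unset Strict Implicit.


Section H.
Variable R : realType.

Lemma LemT_sup (Gam gam : nat -> R) (C a Ca t : R) :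
  0 < C -> 0 <= a -> 0 <= Ca ->
  (forall j, 0 <= gam j) -> (forall k, 0 <= Gam k) ->
  (forall k, Gam k <= Ca * (k`!%:R) `^ a) ->
  1 <= t -> a < t ->
  (esum setT (fun j => (gam j `^ (1 / t))%:E) < +oo)%E ->
  (esum setT (fun u => (Tup C (POD Gam gam) u `^ (1 / t))%:E) < +oo)%E.
Proof.
move=> C0 a0 Ca0 g0 G0 GCa t1 at_ Hg.
have t0 : 0 < t by rewrite (lt_le_trans ltr01).
have q0 : 0 < 1 / t by rewrite divr_gt0.
have HS := LemSinf C0 a0 Ca0 g0 G0 GCa t1 at_ Hg.
pose x (v : {fset nat}) := C ^+ (2 * #|` v|) * POD Gam gam v.
have x0 v : 0 <= x v by rewrite mulr_ge0 ?exprn_ge0 ?POD_ge0 // ltW.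
pose y (v : {fset nat}) := x v `^ (1 / t).
have y0 v : 0 <= y v by exact: powR_ge0.
have H1 := @L2 R Gam gam C 1 (1 / t) a Ca C0 ltr01 q0 a0 (aq_lt1 t0 at_) Ca0 g0 G0 GCa Hg.
have {}H1 : (esum setT (fun v => (y v)%:E) < +oo)%E.
  apply: le_lt_trans H1; apply: le_esum => v _.
  by rewrite lee_fin expr1n mul1r.
have H2 := @L2 R Gam gam C 2 (1 / t) a Ca C0 (ltr0Sn R 1) q0 a0 (aq_lt1 t0 at_) Ca0 g0 G0 GCa Hg.
set E2 := esum _ _ in H2.
have E20 : (0 <= E2)%E by apply: esum_ge0 => v _; rewrite lee_fin mulr_ge0 ?exprn_ge0 ?powR_ge0.
apply: (le_lt_trans (y := (fine E2)%:E)); last exact: ltry.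
apply: esum_le_bound => s us.
pose E u := esum [set v | (u `<=` v)%fset] (fun v => (y v)%:E).
have E0 u : (0 <= E u)%E by apply: esum_ge0 => v _; rewrite lee_fin.
have Efin u : (E u < +oo)%E by apply: le_lt_trans H1; exact: esum_sub_le.
have Efn u : E u \is a fin_num by rewrite ge0_fin_numE.
have step1 u : Tup C (POD Gam gam) u `^ (1 / t) <= fine (E u).
  have Tle : Tup C (POD Gam gam) u <= (fine (E u)) `^ t.
    rewrite /Tup.
    have Xle := @esum_pow_bound R {fset nat} [set v | (u `<=` v)%fset] x t t1 x0 (Efin u).
    set X := esum _ _ in Xle *.
    have X0 : (0 <= X)%E by apply: esum_ge0 => v _; rewrite lee_fin.
    have Xfin : X \is a fin_num.
      by rewrite ge0_fin_numE //; apply: le_lt_trans Xle _; exact: ltry.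
    by rewrite -lee_fin fineK.
  apply: (le_trans (y := ((fine (E u)) `^ t) `^ (1 / t))).
    apply: ge0_ler_powR => //; first exact: ltW.
    - by rewrite nnegrE Tup_ge0.
    - by rewrite nnegrE powR_ge0.
  by rewrite -powRrM div1r mulfV ?gt_eqF // powRr1 // fine_ge0.
apply: (le_trans (y := \sum_(u <- s) fine (E u))); first by apply: ler_sum => u _.
rewrite -lee_fin -sumEFin.
rewrite (eq_bigr (fun u => E u)); last by move=> u _; rewrite fineK.
rewrite fineK; last by rewrite ge0_fin_numE.
rewrite /E.
rewrite (eq_bigr (fun u => esum setT (fun v =>
   if (u `<=` v)%fset then (y v)%:E else 0%E))); last first.
  move=> u _; rewrite esum_mkcond; apply: eq_esum => v _.
  have -> : (v \in [set v | (u `<=` v)%fset]) = (u `<=` v)%fset.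
    by apply/idP/idP => [/set_mem //|H]; exact: mem_set.
  done.
rewrite -esum_sum; last by move=> v u _ _; case: ifP => // _; rewrite lee_fin.
rewrite /E2; apply: le_esum => v _.
rewrite (sum_if_count s (fun u => (u `<=` v)%fset)) lee_fin.
rewrite /y /x; apply: ler_wpM2r; first exact: powR_ge0.
by rewrite -natrX ler_nat count_subsets.
Qed.

End H.

Unset Implicit Arguments. Set Strict Implicit.


Theorem mainTheorem10 (R : realType) (C : R) (Gam gam : nat -> R) (a Ca : R) :
  0 < C ->
  (* POD weight parameters *)
  (forall j, 0 <= gam j) ->
  (forall i j, (i <= j)%N -> gam j <= gam i) ->
  (forall k, 0 <= Gam k) ->
  0 < a -> 0 < Ca ->
  (forall k, Gam k <= Ca * (k`!)%:R `^ a) ->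
  (* hypotheses of the theorem *)
  0 < Gam 1%N ->
  (a%:E < decay gam)%E ->
  (esum setT (fun j : nat => (gam j)%:E) < +oo)%E ->
  S_inf C (POD Gam gam) /\
  decay (Tup C (POD Gam gam)) = decay (POD Gam gam) /\
  decay (POD Gam gam) = decay gam.
Proof.
move=> C0 g0 gdec G0 a0 Ca0 GCa G1 Hdec Hsum.
have a0' : 0 <= a by exact: ltW.
have Ca0' : 0 <= Ca by exact: ltW.
have Hg1 : (esum setT (fun j => (gam j `^ (1 / 1))%:E) < +oo)%E.
  apply: le_lt_trans Hsum; apply: le_esum => j _.
  by rewrite divr1 powRr1.
have [m [m1 am Hm]] : exists m, [/\ 1 <= m, a < m &
    (esum setT (fun j => (gam j `^ (1 / m))%:E) < +oo)%E].
  move: Hdec; rewrite /decay => /ereal_sup_gt [y [[t0 [t00 Ht0] <-]|->]]; last first.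
    by rewrite lte_fin => /(lt_trans a0); rewrite ltxx.
  rewrite lte_fin => at0.
  case: (leP t0 1) => h.
    by exists 1; split => //; apply: lt_le_trans h.
  by exists t0; split => //; exact: ltW.
have HS := LemSinf C0 a0' Ca0' g0 G0 GCa m1 am Hm.
have up t : 0 < t -> (esum setT (fun j => (gam j `^ (1 / t))%:E) < +oo)%E ->
    exists t', [/\ 0 < t', t <= t', 1 <= t', a < t' &
      (esum setT (fun j => (gam j `^ (1 / t'))%:E) < +oo)%E].
  move=> t0 Ht; case: (leP t m) => h.
    by exists m; split => //; exact: (lt_le_trans ltr01 m1).
  exists t; split => //.
    by apply: le_trans (ltW h).
  by apply: lt_trans h.
have eP : decay (POD Gam gam) = decay gam.
  apply/eqP; rewrite eq_le; apply/andP; split.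
    by apply: decay_le_of => t t0 H; exact: (LemP G0 g0 G1 t0 H).
  apply: decay_ge_of => t t0 H.
  have [t' [t'0 tt' t'1 at' Ht']] := up t t0 H.
  exists t'; split => //.
  have q0 : 0 < 1 / t' by rewrite divr_gt0.
  have H' := @L2 R Gam gam 1 1 (1 / t') a Ca ltr01 ltr01 q0 a0' (aq_lt1 t'0 at') Ca0' g0 G0 GCa Ht'.
  apply: le_lt_trans H'; apply: le_esum => v _.
  by rewrite lee_fin !expr1n !mul1r.
have eT : decay (Tup C (POD Gam gam)) = decay gam.
  apply/eqP; rewrite eq_le; apply/andP; split.
    by apply: decay_le_of => t t0 H; exact: (LemT_sub C0 g0 G0 G1 HS t0 H).
  apply: decay_ge_of => t t0 H.
  have [t' [t'0 tt' t'1 at' Ht']] := up t t0 H.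
  exists t'; split => //.
  exact: (LemT_sup C0 a0' Ca0' g0 G0 GCa t'1 at' Ht').
by split => //; split; rewrite ?eT eP.
Qed.
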